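(* Let $K$ be a subfield of $\mathbb{R}$, let $A$ be a commutative $K$-algebra (with $1$) and let $T\subseteq A$ be a preordering of $A$. Suppose that $A$ (equipped with $T$) is f.f., almost archimedean and reduced (i.e. $A$ has no nonzero nilpotent elements). Then $A$ is the directed union $A=\bigcup B$ of its finitely generated $K$-subalgebras $B$ that are almost archimedean when equipped with the preordering $T\cap B$. More precisely, every finite subset of $A$ is contained in such a subalgebra $B$, and any two such subalgebras are contained in a third one.
   Context: A preordering of a commutative ring $A$ is a subset $T\subseteq A$ with $T+T\subseteq T$, $TT\subseteq T$ and $a^2\in T$ for all $a\in A$. If $B\subseteq A$ is a subring, $B$ is equipped with the preordering $T\cap B$. An ordering of a ring $A$ is a subset $P\subseteq A$ with $P+P\subseteq P$, $PP\subseteq P$, $P\cup -P=A$ and $P\cap -P$ a prime ideal of $A$. For a ring $A$ with preordering $T$, $\operatorname{sper} A$ denotes the set of orderings $P$ of $A$ with $T\subseteq P$. An ordering $P$ is archimedean if for every $a\in A$ there is $N\in\mathbb{N}$ with $N-a\in P$. The preordered ring $A$ is called almost archimedean if every $P\in\operatorname{sper}A$ for which $P\cap -P$ is a minimal prime ideal of $A$ is archimedean. The $K$-algebra $A$ is called f.f. if $A$ has only finitely many minimal prime ideals and, for each minimal prime ideal $\mathfrak{p}$ of $A$, the quotient field $\operatorname{qf}(A/\mathfrak{p})$ is a finitely generated field extension of $K$. ''f.g.'' means finitely generated as a $K$-algebra. *)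

(* Defs.v *)
From HB Require Import structures.
From mathcomp Require Import all_boot all_order all_algebra.
From mathcomp Require Export reals.
Set Implicit Arguments.
Unset Strict Implicit.
Unset Printing Implicit Defensive.
Import Order.TTheory GRing.Theory Num.Theory.
Local Open Scope ring_scope.

(* Subsets of a ring are predicates A -> Prop.  All notions below are
   relative to a carrier S : A -> Prop (a subring/subalgebra of A); taking
   S := fun _ => True gives the usual notions for A itself, and taking S := B
   gives the notions for the ring B (with B's prime ideals, orderings, ...
   being subsets of B). *)

Section Defs.
Variable (K : fieldType) (A : comAlgType K).

Definition subset_of (X Y : A -> Prop) : Prop := forall x, X x -> Y x.

Definition full : A -> Prop := fun _ => True.

Definition is_subalg (S : A -> Prop) : Prop :=
  [/\ S 1, (forall x y, S x -> S y -> S (x + y)),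
      (forall x y, S x -> S y -> S (x * y)) &
      (forall (k : K) x, S x -> S (k *: x))].

Definition gen_subalg (s : seq A) : A -> Prop :=
  fun x => forall S, is_subalg S -> (forall y, y \in s -> S y) -> S x.

Definition fg_subalg (B : A -> Prop) : Prop :=
  exists s : seq A, forall x, B x <-> gen_subalg s x.

Definition ideal_in (S I : A -> Prop) : Prop :=
  [/\ subset_of I S, I 0, (forall x y, I x -> I y -> I (x + y)) &
      (forall a x, S a -> I x -> I (a * x))].

Definition prime_in (S p : A -> Prop) : Prop :=
  [/\ ideal_in S p, ~ p 1 &
      (forall x y, S x -> S y -> p (x * y) -> p x \/ p y)].

Definition minimal_prime_in (S p : A -> Prop) : Prop :=
  prime_in S p /\ (forall q, prime_in S q -> subset_of q p -> subset_of p q).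

Definition preordering_in (S T : A -> Prop) : Prop :=
  [/\ subset_of T S, (forall x y, T x -> T y -> T (x + y)),
      (forall x y, T x -> T y -> T (x * y)) &
      (forall a, S a -> T (a ^+ 2))].

Definition supp (P : A -> Prop) : A -> Prop := fun x => P x /\ P (- x).

Definition ordering_in (S P : A -> Prop) : Prop :=
  [/\ subset_of P S, (forall x y, P x -> P y -> P (x + y)),
      (forall x y, P x -> P y -> P (x * y)),
      (forall a, S a -> P a \/ P (- a)) &
      prime_in S (supp P)].

Definition archimedean_in (S P : A -> Prop) : Prop :=
  forall a, S a -> exists N : nat, P (N%:R - a).

(* The ring S equipped with the preordering T /\ S is almost archimedean:
   every P in sper S (i.e. ordering of S containing T /\ S) whose support
   is a minimal prime ideal of S is archimedean. *)
Definition almost_archimedean_in (S T : A -> Prop) : Prop :=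
  forall P, ordering_in S P -> subset_of (fun x => T x /\ S x) P ->
    minimal_prime_in S (supp P) -> archimedean_in S P.

Definition reduced : Prop := forall (x : A) (n : nat), x ^+ n = 0 -> x = 0.

(* qf(A/p) is a finitely generated field extension of K: there are finitely
   many c_1..c_n in A such that qf(A/p) = K(c_1 mod p, ..., c_n mod p); i.e.
   every element [a]/[b] (b notin p) of qf(A/p) equals [u]/[v] with
   u, v in K[c_1..c_n] and v notin p. *)
Definition qf_quot_fg (p : A -> Prop) : Prop :=
  exists c : seq A, forall a b, ~ p b ->
    exists u v, [/\ gen_subalg c u, gen_subalg c v, ~ p v &
                    p (a * v - u * b)].

(* A is f.f.: finitely many minimal primes, each with qf(A/p) f.g. over K. *)
Definition ff_alg : Prop :=
  (exists (n : nat) (ps : 'I_n -> (A -> Prop)), forall p,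
      minimal_prime_in full p -> exists i : 'I_n, forall x, p x <-> ps i x) /\
  (forall p, minimal_prime_in full p -> qf_quot_fg p).

End Defs.

(* Main.v *)
Require Import Defs.
From HB Require Import structures.
From mathcomp Require Import all_boot all_order all_algebra reals.
From mathcomp Require Import boolp classical_sets ring.
Set Implicit Arguments.
Unset Strict Implicit.
Import GRing.Theory.
Local Open Scope classical_set_scope.
Local Open Scope ring_scope.

Section Gen.
Variables (K : fieldType) (A : comAlgType K).

Lemma pred_ext (p p' : A -> Prop) : (forall x, p x <-> p' x) -> p = p'.
Proof. by move=> h; apply: funext => x; apply: propext. Qed.

Lemma gen_is_subalg (s : seq A) : is_subalg (gen_subalg s).
Proof.
split.
- by move=> S [] ? _ _ _ _.
- by move=> x y hx hy S HS hs; case: (HS) => _ h _ _; apply: h; [apply: hx|apply: hy].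
- by move=> x y hx hy S HS hs; case: (HS) => _ _ h _; apply: h; [apply: hx|apply: hy].
- by move=> k x hx S HS hs; case: (HS) => _ _ _ h; apply: h; apply: hx.
Qed.

Lemma gen_mem (s : seq A) y : y \in s -> gen_subalg s y.
Proof. by move=> hy S _ hs; apply: hs. Qed.

Lemma gen_mono (c s : seq A) : (forall y, y \in c -> y \in s) ->
  forall x, gen_subalg c x -> gen_subalg s x.
Proof.
move=> H x hx; apply: hx; first exact: gen_is_subalg.
by move=> y /H; apply: gen_mem.
Qed.

Section Sub.
Variable S : A -> Prop.
Hypothesis HS : is_subalg S.
Lemma sub1 : S 1. Proof. by case: HS. Qed.
Lemma subD x y : S x -> S y -> S (x + y). Proof. by case: HS => _ h _ _; apply: h. Qed.
Lemma subM x y : S x -> S y -> S (x * y). Proof. by case: HS => _ _ h _; apply: h. Qed.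
Lemma subZ (k : K) x : S x -> S (k *: x). Proof. by case: HS => _ _ _ h; apply: h. Qed.
Lemma sub0 : S 0. Proof. by have := subZ 0 sub1; rewrite scale0r. Qed.
Lemma subN x : S x -> S (- x). Proof. by move=> /(subZ (-1)); rewrite scaleN1r. Qed.
Lemma subB x y : S x -> S y -> S (x - y). Proof. by move=> hx hy; apply: subD => //; apply: subN. Qed.
Lemma subnat (m : nat) : S m%:R.
Proof. elim: m => [|m IH]; first exact: sub0. by rewrite -addn1 natrD; apply: subD => //; apply: sub1. Qed.
Lemma subX x m : S x -> S (x ^+ m).
Proof. move=> hx; elim: m => [|m IH]; first by rewrite expr0; apply: sub1. by rewrite exprS; apply: subM. Qed.
End Sub.

Lemma reduced_minprime_zero : reduced A -> forall y : A,
  (forall p, minimal_prime_in (@full _ A) p -> p y) -> y = 0.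
Proof.
move=> red y Hy; apply: contrapT => ny.
pose Good (M : set A) := [/\ (forall x z, M x -> M z -> M (x * z)), ~ M 0 &
   ((exists x, M x) -> M 1 /\ M y)].
have [Mx [GM maxM]] : exists M, Good M /\ forall B, M `<` B -> ~ Good B.
  apply: Zorn_bigcup => F FG tot; split.
  - move=> x z [X FX Xx] [Z FZ Zz]; case: (tot X Z FX FZ) => [XZ|ZX].
      by exists Z => //; have [m _ _] := FG Z FZ; apply: m => //; apply: XZ.
    by exists X => //; have [m _ _] := FG X FX; apply: m => //; apply: ZX.
  - by move=> [X FX X0]; have [_ n _] := FG X FX; apply: n.
  - move=> [x [X FX Xx]]; have [_ _ h] := FG X FX.
    by have [h1 hy] := h (ex_intro _ x Xx); split; exists X.
have [Mm Mn0 Mne] := GM.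
have [M1 My] : Mx 1 /\ Mx y.
  apply: Mne; apply: contrapT => hne.
  pose S0 (z : A) := exists k, z = y ^+ k.
  apply: (maxM S0).
    split; first by move=> z Mz; exfalso; apply: hne; exists z.
    by move=> h; apply: hne; exists 1; apply: h; exists 0%N; rewrite expr0.
  split.
  - by move=> x z [a ->] [b ->]; exists (a + b)%N; rewrite exprD.
  - by move=> [k /esym /red].
  - by move=> _; split; [exists 0%N; rewrite expr0 | exists 1%N; rewrite expr1].
have key : forall x, ~ Mx x -> exists m, Mx m /\ m * x = 0.
  move=> x nx.
  pose M' (z : A) := exists m k, Mx m /\ z = m * x ^+ k.
  case: (pselect (M' 0)) => [[m [k [Mm0 e]]]|nM'].
    exists m; split => //; case: k e => [|k] e.
      by exfalso; apply: (Mn0); rewrite e expr0 mulr1.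
    apply: (red _ k.+1); rewrite exprMn exprSr -mulrA -e.
    by rewrite mulr0.
  exfalso; apply: (maxM M').
    split; first by move=> z Mz; exists z, 0%N; rewrite expr0 mulr1.
    by move=> h; apply: nx; apply: h; exists 1, 1%N; rewrite mul1r expr1.
  split => //.
  - move=> a b [m1 [k1 [h1 ->]]] [m2 [k2 [h2 ->]]].
    by exists (m1 * m2), (k1 + k2)%N; split; [apply: (Mm) | rewrite exprD mulrACA].
  - by move=> _; split; [exists 1, 0%N | exists y, 0%N]; rewrite expr0 mulr1.
pose p (z : A) := ~ Mx z.
have pp : prime_in (@full _ A) p.
  split; [split|..].
  - by [].
  - exact: Mn0.
  - move=> x z px pz Mxz.
    have [m1 [Mm1 e1]] := key x px; have [m2 [Mm2 e2]] := key z pz.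
    apply: (Mn0).
    have -> : (0 : A) = (m1 * m2) * (x + z).
      by rewrite mulrDr mulrAC e1 mul0r -mulrA e2 mulr0 addr0.
    by apply: (Mm) => //; apply: (Mm).
  - move=> a x _ px Max.
    have [m [Mm0 e]] := key x px; apply: (Mn0).
    have -> : (0 : A) = m * (a * x) by rewrite mulrCA e mulr0.
    by apply: (Mm).
  - by apply.
  - move=> x z _ _ pxz; apply: contrapT => h.
    apply: pxz; apply: (Mm); apply: contrapT => h'; apply: h; [left|right]; exact: h'.
have mp : minimal_prime_in (@full _ A) p.
  split => // q [[_ q0 _ _] q1 qpr] qp z pz; apply: contrapT => nqz.
  pose C (w : A) := ~ q w.
  apply: (maxM C).
    split; first by move=> w Mw qw; apply: (qp w qw).
    by move=> h; apply: pz; apply: h.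
  split.
  - move=> a b ca cb qab; by case: (qpr a b I I qab).
  - by apply.
  - move=> _; split => // qy; by apply: (qp y qy).
by apply: (Hy p mp).
Qed.

End Gen.


Section Main.
Variables (K : fieldType) (A : comAlgType K) (T : A -> Prop).
Variables (n : nat) (ps : 'I_n -> A -> Prop).
Hypothesis red : reduced A.
Hypothesis Hps : forall p, minimal_prime_in (@full _ A) p ->
  exists i : 'I_n, forall x, p x <-> ps i x.

Notation mp p := (minimal_prime_in (@full _ A) p).

Lemma zero_of_all y : (forall i, mp (ps i) -> ps i y) -> y = 0.
Proof.
move=> H; apply: reduced_minprime_zero => // p mpp.
have [i Hi] := Hps mpp.
have e := pred_ext Hi; subst p; exact: H.
Qed.

Lemma ideal_opp (S I : A -> Prop) x : ideal_in S I -> S (-1) -> I x -> I (- x).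
Proof. by case=> _ _ _ h s1 ix; rewrite -mulN1r; apply: h. Qed.

Lemma prime_prod (S p : A -> Prop) (r : seq 'I_n) (F : 'I_n -> A) :
  prime_in S p -> is_subalg S -> (forall i, S (F i) /\ ~ p (F i)) ->
  S (\prod_(i <- r) F i) /\ ~ p (\prod_(i <- r) F i).
Proof.
move=> [[_ _ _ _] p1 ppr] HS HF.
apply: (big_ind (fun x => S x /\ ~ p x)).
- by split; [apply: sub1 | ].
- move=> x y [sx px] [sy py]; split; first exact: subM.
  by case/(ppr _ _ sx sy).
- by move=> i _; apply: HF.
Qed.

Lemma annihilator i : mp (ps i) ->
  exists e, ~ ps i e /\ forall x, ps i x -> x * e = 0.
Proof.
move=> mpi; have [[[_ p0 pD pM] p1 ppr] pmin] := mpi.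
have : forall j, exists g, ~ ps i g /\
   ((exists z, ps j z /\ ~ ps i z) -> ps j g).
  move=> j; case: (pselect (exists z, ps j z /\ ~ ps i z)) => [[z [h1 h2]]|h].
    by exists z.
  by exists 1.
case/choice => g Hg.
exists (\prod_(j < n) g j); split.
  have fullS : is_subalg (@full _ A) by split.
  have [_ //] := @prime_prod (@full _ A) (ps i) (index_enum _) g mpi.1 fullS
    (fun j => conj I (proj1 (Hg j))).
move=> x px; apply: zero_of_all => j mpj.
have [[[_ q0 qD qM] q1 qpr] qmin] := mpj.
case: (pselect (exists z, ps j z /\ ~ ps i z)) => [h|h].
  rewrite (bigD1 j) //= mulrCA mulrC; apply: (qM) => //.
  by case: (Hg j) => _ /(_ h).
have sub : subset_of (ps j) (ps i).
  by move=> z pz; apply: contrapT => npz; apply: h; exists z.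
have := pmin _ mpj.1 sub x px => pjx.
by rewrite mulrC; apply: (qM).
Qed.


Hypothesis HT : preordering_in (@full _ A) T.
Hypothesis HAA : almost_archimedean_in (@full _ A) T.

Lemma good_B (s : seq A) (e : 'I_n -> A) (c : 'I_n -> seq A) :
 (forall i, mp (ps i) -> [/\ e i \in s, ~ ps i (e i),
    (forall x, ps i x -> x * e i = 0), (forall y, y \in c i -> y \in s) &
    (forall a b, ~ ps i b -> exists u v, [/\ gen_subalg (c i) u,
        gen_subalg (c i) v, ~ ps i v & ps i (a * v - u * b)])]) ->
 almost_archimedean_in (gen_subalg s) T.
Proof.
move=> H P ordP TP mq.
set B := gen_subalg s.
have sB : is_subalg B := gen_is_subalg s.
have BD := subD sB; have BM := subM sB; have BN := subN sB; have BB := subB sB.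
have B0 : B 0 := sub0 sB. have B1 : B 1 := sub1 sB.
case: (ordP) => PB Padd Pmul Ptot qprime.
have [[qB q0 qD qM] q1 qpr] := qprime.
have [i [mpi Hsub]] : exists i, mp (ps i) /\ forall x, B x -> ps i x -> supp P x.
  apply: contrapT => hn.
  have : forall i, exists x, B x /\ ~ supp P x /\ (mp (ps i) -> ps i x).
    move=> i; case: (pselect (mp (ps i))) => [mi|nmi]; last first.
      by exists 1; split; [apply: (B1) | split].
    apply: contrapT => hx; apply: hn; exists i; split => // x Bx px.
    by apply: contrapT => nq; apply: hx; exists x.
  case/choice => f Hf.
  have [Bz nqz] := @prime_prod B (supp P) (index_enum _) f qprime sB
     (fun j => conj (proj1 (Hf j)) (proj1 (proj2 (Hf j)))).
  apply: nqz.
  have -> : \prod_(j <- index_enum 'I_n) f j = 0.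
    apply: zero_of_all => j mpj.
    rewrite (bigD1 j) //= mulrC.
    have [[[_ _ _ qM'] _ _] _] := mpj.
    apply: qM' => //; exact: (proj2 (proj2 (Hf j)) mpj).
  exact: q0.
have [es ne eann cs qf] := H i mpi.
set p := ps i.
have [[[_ p0 pD pM] p1 ppr] pmin] := mpi.
have pN : forall x, p x -> p (- x).
  by move=> x px; rewrite -mulN1r; apply: (pM).
have pMr : forall a x, p x -> p (x * a).
  by move=> a x px; rewrite mulrC; apply: (pM).
have qp : forall x, supp P x -> p x.
  have cp : prime_in B (fun x => B x /\ p x).
    split; [split|..].
    - by move=> x [].
    - by split; [apply: (B0)|].
    - by move=> x y [bx px] [bY py]; split; [apply: (BD) | apply: (pD)].
    - by move=> a x ba [bx px]; split; [apply: (BM) | apply: (pM)].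
    - by case.
    - by move=> x y bx bY [_ /(ppr _ _ I I) [h|h]]; [left|right].
  by move=> x qx; have := mq.2 _ cp (fun z bz => Hsub z bz.1 bz.2) x qx; case.
have Bsub : forall x, B x -> p x -> P x by move=> x bx px; case: (Hsub x bx px).
have Lmod : forall x y, B x -> B y -> p (x - y) -> P y -> P x.
  move=> x y bx bY pxy Py; have -> : x = y + (x - y) by rewrite addrC subrK.
  by apply: (Padd) => //; apply: (Bsub) => //; apply: (BB).
have Lcancel : forall x w, B x -> B w -> ~ p w -> P w -> P (x * w) -> P x.
  move=> x w bx bw npw Pw Pxw; case: (Ptot x bx) => // Pnx.
  have : supp P (x * w) by split => //; rewrite -mulNr; apply: (Pmul).
  by move/qp/(ppr _ _ I I) => [px|pw] //; apply: (Bsub).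
have Psq : forall v, B v -> P (v * v).
  move=> v bv; case: (Ptot v bv) => h; first exact: (Pmul).
  by rewrite -mulrNN; apply: (Pmul).
have npsq : forall v, ~ p v -> ~ p (v * v) by move=> v nv /(ppr _ _ I I) [].
have Bc : forall x, gen_subalg (c i) x -> B x := gen_mono cs.
have Be : B (e i) := gen_mem es.
pose P' a := exists u v, [/\ B u, B v, ~ p v, p (a * v - u) & P (u * v)].
have P'rep : forall a, exists u v, [/\ B u, B v, ~ p v & p (a * v - u)].
  move=> a; have [u [v [gu gv nv h]]] := qf a 1 p1.
  by exists u, v; split => //; [exact: (Bc) | exact: (Bc) | rewrite mulr1 in h].
have P0 : P 0.
  have b0 : B 0 := sub0 sB.
  by case: (Ptot 0 b0); rewrite ?oppr0.
have supp' : forall x, supp P' x <-> p x.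
  move=> x; split.
  - case=> [[u1 [v1 [bu1 bv1 nv1 h1 P1]]] [u2 [v2 [bu2 bv2 nv2 h2 P2]]]].
    pose X := u1 * v1 * (v2 * v2); pose Y := u2 * v2 * (v1 * v1).
    have bX : B X by apply: (BM); apply: (BM).
    have bY : B Y by apply: (BM); apply: (BM).
    have PX : P X by apply: (Pmul) => //; apply: (Psq).
    have PY : P Y by apply: (Pmul) => //; apply: (Psq).
    have pXY : p (X + Y).
      have -> : X + Y = - (v1 * v2) *
          ((x * v1 - u1) * v2 + ((- x) * v2 - u2) * v1) by rewrite /X /Y; ring.
      by apply: (pM) => //; apply: (pD); apply: (pMr).
    have qXY : supp P (X + Y) := Hsub _ (BD _ _ bX bY) pXY.
    have PnX : P (- X).
      have -> : - X = Y + - (X + Y) by ring.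
      by apply: (Padd) => //; case: qXY.
    have : p X := qp _ (conj PX PnX).
    rewrite /X => /(ppr _ _ I I) [/(ppr _ _ I I) [pu1|//] | /npsq //].
    have : p (x * v1).
      have -> : x * v1 = (x * v1 - u1) + u1 by ring.
      by apply: (pD).
    by move/(ppr _ _ I I) => [//|//].
  - move=> px; split; exists 0, 1; (split; [apply: (B0) | apply: (B1) | by [] | | by rewrite mul0r]).
      by rewrite mulr1 subr0.
    by rewrite mulr1 subr0; apply: (pN).
have P'T : subset_of (fun x => T x /\ full x) P'.
  move=> t [Tt _]; have [u [v [bu bv nv h]]] := P'rep t; exists u, v; split => //.
  apply: (Lcancel _ (e i * e i)); [exact: (BM) | exact: (BM) | exact: (npsq) | exact: (Psq) |].
  apply: TP; split; last by apply: (BM); apply: (BM).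
  have h0 := eann _ h.
  have -> : u * v * (e i * e i) = t * (v * e i) ^+ 2 - (t * v - u) * e i * (v * e i) by ring.
  rewrite h0 mul0r subr0.
  by case: HT => _ _ Tmul Tsq; apply: Tmul => //; apply: Tsq.
have ordP' : ordering_in (@full _ A) P'.
  split.
  - by [].
  - move=> a1 a2 [u1 [v1 [bu1 bv1 nv1 h1 P1]]] [u2 [v2 [bu2 bv2 nv2 h2 P2]]].
    exists (u1 * v2 + u2 * v1), (v1 * v2); split.
    + by apply: (BD); apply: (BM).
    + exact: (BM).
    + by move/(ppr _ _ I I) => [].
    + have -> : (a1 + a2) * (v1 * v2) - (u1 * v2 + u2 * v1)
          = (a1 * v1 - u1) * v2 + (a2 * v2 - u2) * v1 by ring.
      by apply: (pD); apply: (pMr).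
    + have -> : (u1 * v2 + u2 * v1) * (v1 * v2)
          = u1 * v1 * (v2 * v2) + u2 * v2 * (v1 * v1) by ring.
      by apply: (Padd); apply: (Pmul) => //; apply: (Psq).
  - move=> a1 a2 [u1 [v1 [bu1 bv1 nv1 h1 P1]]] [u2 [v2 [bu2 bv2 nv2 h2 P2]]].
    exists (u1 * u2), (v1 * v2); split.
    + exact: (BM).
    + exact: (BM).
    + by move/(ppr _ _ I I) => [].
    + have -> : (a1 * a2) * (v1 * v2) - (u1 * u2)
          = (a1 * v1 - u1) * (a2 * v2) + (a2 * v2 - u2) * u1 by ring.
      by apply: (pD); apply: (pMr).
    + have -> : (u1 * u2) * (v1 * v2) = (u1 * v1) * (u2 * v2) by ring.
      exact: (Pmul).
  - move=> a _; have [u [v [bu bv nv h]]] := P'rep a.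
    case: (Ptot (u * v) (BM _ _ bu bv)) => hP; [left; exists u, v | right; exists (- u), v].
      by split.
    split => //; first exact: (BN).
      have -> : - a * v - - u = - (a * v - u) by ring.
      exact: (pN).
    by rewrite mulNr.
  - rewrite (pred_ext supp'); exact: mpi.1.
have mpP' : mp (supp P') by rewrite (pred_ext supp').
have arch := HAA ordP' P'T mpP'.
move=> b bb; have [N [u [v [bu bv nv h Puv]]]] := arch b I.
have bN : B (N%:R - b) by apply: (BB) => //; apply: (subnat sB).
exists N; apply: (Lcancel _ (v * v)); [by [] | exact: (BM) | exact: (npsq) | exact: (Psq) |].
have bvv := BM _ _ bv bv.
apply: (Lmod _ (u * v) (BM _ _ bN bvv) (BM _ _ bu bv) _ Puv).
have -> : (N%:R - b) * (v * v) - u * v = ((N%:R - b) * v - u) * v by ring.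
exact: (pMr).
Qed.

End Main.


Theorem lemma4p7 (R : realType) (K : fieldType) (iota : {rmorphism K -> R})
    (A : comAlgType K) (T : A -> Prop) :
  preordering_in (@full _ A) T ->
  ff_alg A ->
  almost_archimedean_in (@full _ A) T ->
  reduced A ->
  let good (B : A -> Prop) := fg_subalg B /\ almost_archimedean_in B T in
  (forall s : seq A, exists B, good B /\ (forall x, x \in s -> B x)) /\
  (forall B1 B2, good B1 -> good B2 ->
     exists B3, [/\ good B3, subset_of B1 B3 & subset_of B2 B3]).
Proof.
move=> HT [[n [ps Hps]] Hqf] HAA red good.
have He : forall j, exists ej, minimal_prime_in (@full _ A) (ps j) ->
    ~ ps j ej /\ forall x, ps j x -> x * ej = 0.
  move=> j; case: (pselect (minimal_prime_in (@full _ A) (ps j))) => [mj|nmj].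
    by have [ej hj] := annihilator red Hps mj; exists ej.
  by exists 0.
have Hc : forall j, exists cj, minimal_prime_in (@full _ A) (ps j) ->
    (forall a b, ~ ps j b -> exists u v, [/\ gen_subalg cj u,
        gen_subalg cj v, ~ ps j v & ps j (a * v - u * b)]).
  move=> j; case: (pselect (minimal_prime_in (@full _ A) (ps j))) => [mj|nmj].
    by have [cj hj] := Hqf _ mj; exists cj.
  by exists [::].
case/choice: He => e He; case/choice: Hc => c Hc.
pose L := flatten [seq e j :: c j | j <- enum 'I_n].
have mk : forall s, good (gen_subalg (s ++ L)).
  move=> s; split; first by exists (s ++ L).
  apply: (good_B red Hps HT HAA (e := e) (c := c)) => i mi.
  have [ne ann] := He i mi.
  have inL : forall y, y \in e i :: c i -> y \in s ++ L.
    move=> y hy; rewrite mem_cat; apply/orP; right.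
    by apply/flatten_mapP; exists i; rewrite ?mem_enum.
  split => //.
  - by apply: inL; rewrite inE eqxx.
  - by move=> y hy; apply: inL; rewrite inE hy orbT.
  - exact: Hc.
split.
  move=> s; exists (gen_subalg (s ++ L)); split; first exact: mk.
  by move=> x hx; apply: gen_mem; rewrite mem_cat hx.
move=> B1 B2 [[s1 H1] _] [[s2 H2] _].
exists (gen_subalg ((s1 ++ s2) ++ L)); split.
- exact: mk.
- move=> x /H1; apply: gen_mono => y hy; by rewrite !mem_cat hy.
- move=> x /H2; apply: gen_mono => y hy; by rewrite !mem_cat hy orbT.
Qed.
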